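(* Let $f:\mathbb{R}^n\to\mathbb{R}$ be differentiable and $c:\mathbb{R}^n\to\mathbb{R}^m$ differentiable with Jacobian $J(\cdot)$, and let $x\in\mathbb{R}^n$, $L,\Gamma>0$ be such that for all $s$ on the segment $\{\alpha\bar d:\alpha\in[0,1]\}$, $f(x+s)\le f(x)+\nabla f(x)^Ts+\tfrac L2\|s\|_2^2$ and $\|c(x+s)-c(x)-J(x)s\|_1\le\tfrac\Gamma2\|s\|_2^2$. Write $g=\nabla f(x)$, $c=c(x)$, $J=J(x)$, and let $\phi(z,\tau):=\tau f(z)+\|c(z)\|_1$. Let $d,\tilde d,\bar d,\bar g\in\mathbb{R}^n$ with $c+Jd=0$ and $c+J\tilde d=0$, let $\tau,\bar\tau>0$, $\eta\in(0,1)$, $\beta\in(0,1]$, $\sigma\in[2,4]$, and let $\bar\alpha\in(0,1]$ satisfy $\bar\alpha\le\dfrac{2(1-\eta)\beta^{\sigma/2-1}\Delta l(\bar\tau,\bar g,\bar d)}{(\bar\tau L+\Gamma)\|\bar d\|_2^2}$ (with $\bar d\neq0$). Then $$\phi(x+\bar\alpha\bar d,\bar\tau)-\phi(x,\bar\tau)\le-\bar\alpha\Delta l(\tau,g,d)+(1-\eta)\bar\alpha\beta^{\sigma/2-1}\Delta l(\bar\tau,\bar g,\bar d)+\bar\alpha\bar\tau g^T(\bar d-d)+\bar\alpha(\bar\tau-\tau)g^Td+\bar\alpha\|J(\bar d-\tilde d)\|_1.$$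
   Context: $\Delta l(\tau,g,d):=-\tau g^Td+\|c\|_1-\|c+Jd\|_1$ with $c=c(x)$, $J=J(x)$. *)

(* Defs.v *)
From HB Require Import structures.
From mathcomp Require Import all_boot all_order all_algebra.
From mathcomp Require Import all_classical all_reals all_analysis.
Set Implicit Arguments. Unset Strict Implicit. Unset Printing Implicit Defensive.
Import Order.TTheory GRing.Theory Num.Theory.
Import numFieldNormedType.Exports.
Local Open Scope ring_scope.

Definition dotv {R : numDomainType} {n : nat} (u v : 'cV[R]_n) : R :=
  \sum_(i < n) u i 0 * v i 0.

Definition norm1 {R : numDomainType} {k : nat} (v : 'cV[R]_k) : R :=
  \sum_(i < k) `|v i 0|.

Definition sqnorm2 {R : numDomainType} {k : nat} (v : 'cV[R]_k) : R :=
  \sum_(i < k) v i 0 ^+ 2.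

(* Delta l(tau, g, d) := - tau g^T d + ||c||_1 - ||c + J d||_1,  with c = c(x), J = J(x) *)
Definition Delta_l {R : numDomainType} {n m : nat} (c : 'cV[R]_m) (J : 'M[R]_(m, n))
  (tau : R) (g d : 'cV[R]_n) : R :=
  - (tau * dotv g d) + norm1 c - norm1 (c + J *m d).

Definition phi {R : numDomainType} {n m : nat} (f : 'cV[R]_n -> R)
  (c : 'cV[R]_n -> 'cV[R]_m) (z : 'cV[R]_n) (tau : R) : R :=
  tau * f z + norm1 (c z).

(* Main.v *)
Require Import Defs.
From HB Require Import structures.
From mathcomp Require Import all_boot all_order all_algebra.
From mathcomp Require Import all_classical all_reals all_analysis.
Import Order.TTheory GRing.Theory Num.Theory.
Import numFieldNormedType.Exports.
Local Open Scope ring_scope.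


From mathcomp Require Import ring lra.

Lemma zz (V : zmodType) (u c w y : V) : u = u - c - w + (c - y + (w + y)).
Proof. rewrite -[LHS]addr0 -!addrA; congr (_ + _).
rewrite (addrC (-y)) addrK (addrCA (-w)) addNr addr0 addNr //. Qed.

Lemma dotvZ (R : realType) n (g v : 'cV[R]_n) a : dotv g (a *: v) = a * dotv g v.
Proof. rewrite /dotv mulr_sumr; apply: eq_bigr => i _; rewrite mxE; ring. Qed.

Lemma dotvB (R : realType) n (g u v : 'cV[R]_n) : dotv g (u - v) = dotv g u - dotv g v.
Proof. rewrite /dotv -sumrB; apply: eq_bigr => i _; rewrite !mxE; ring. Qed.

Lemma sqnorm2Z (R : realType) n (v : 'cV[R]_n) a : sqnorm2 (a *: v) = a ^+ 2 * sqnorm2 v.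
Proof. rewrite /sqnorm2 mulr_sumr; apply: eq_bigr => i _; rewrite mxE; ring. Qed.

Lemma norm1D (R : numDomainType) k (u v : 'cV[R]_k) : norm1 (u + v) <= norm1 u + norm1 v.
Proof. rewrite /norm1 -big_split /=; apply: ler_sum => i _; rewrite mxE; exact: ler_normD. Qed.

Lemma norm1Z (R : numDomainType) k (v : 'cV[R]_k) a : norm1 (a *: v) = `|a| * norm1 v.
Proof. rewrite /norm1 mulr_sumr; apply: eq_bigr => i _; rewrite mxE normrM //. Qed.

Lemma norm10 (R : numDomainType) k : norm1 (0 : 'cV[R]_k) = 0.
Proof. rewrite /norm1 big1 // => i _; by rewrite mxE normr0. Qed.

Lemma sqnorm2_gt0 (R : realType) n (v : 'cV[R]_n) : v != 0 -> 0 < sqnorm2 v.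
Proof.
move=> nz. have [i Hi] : exists i, v i 0 != 0.
  apply/existsP; apply: contraR nz => /existsPn H; apply/eqP/matrixP => a b.
  rewrite (ord1 b) mxE; exact/eqP/negbNE/H.
have h1 : 0 < v i 0 ^+ 2 by rewrite lt_def sqr_ge0 sqrf_eq0 Hi.
rewrite /sqnorm2 (bigD1 i) //= ltr_pwDl //; apply: sumr_ge0 => j _; exact: sqr_ge0.
Qed.

Theorem lemma4p8 (R : realType) (n m : nat)
  (f : 'cV[R]_n -> R) (c : 'cV[R]_n -> 'cV[R]_m)
  (x g : 'cV[R]_n) (J : 'M[R]_(m, n)) (L Gamma : R)
  (d dt db gb : 'cV[R]_n) (tau taub eta beta sigma alphab : R) :
  (forall z, differentiable f z) ->
  (forall z, differentiable c z) ->
  (* g = grad f(x) *)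
  (forall s, 'd f x s = dotv g s) ->
  (* J = J(x), the Jacobian of c at x *)
  (forall s, 'd c x s = J *m s) ->
  0 < L -> 0 < Gamma ->
  (forall a, 0 <= a <= 1 ->
     f (x + a *: db) <= f x + dotv g (a *: db) + L / 2 * sqnorm2 (a *: db)) ->
  (forall a, 0 <= a <= 1 ->
     norm1 (c (x + a *: db) - c x - J *m (a *: db)) <= Gamma / 2 * sqnorm2 (a *: db)) ->
  c x + J *m d = 0 ->
  c x + J *m dt = 0 ->
  0 < tau -> 0 < taub ->
  0 < eta < 1 -> 0 < beta <= 1 -> 2 <= sigma <= 4 ->
  0 < alphab <= 1 ->
  db != 0 ->
  alphab <= 2 * (1 - eta) * beta `^ (sigma / 2 - 1) * Delta_l (c x) J taub gb db
            / ((taub * L + Gamma) * sqnorm2 db) ->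
  phi f c (x + alphab *: db) taub - phi f c x taub <=
    - (alphab * Delta_l (c x) J tau g d)
    + (1 - eta) * alphab * beta `^ (sigma / 2 - 1) * Delta_l (c x) J taub gb db
    + alphab * taub * dotv g (db - d)
    + alphab * (taub - tau) * dotv g d
    + alphab * norm1 (J *m (db - dt)).
Proof.
move=> _ _ _ _ hL hG Hf Hc Hd Hdt ht htb /andP[he0 he1] _ _ /andP[ha0 ha1] hdb Hal.
set B := beta `^ _ in Hal *.
set DLb := Delta_l (c x) J taub gb db in Hal *.
set P := sqnorm2 db in Hal.
have hP : 0 < P by exact: sqnorm2_gt0.
have hK : 0 < (taub * L + Gamma) * P by apply: mulr_gt0 => //; nra.
rewrite ler_pdivlMr // in Hal.
have a01 : 0 <= alphab <= 1 by apply/andP; split => //; exact: ltW.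
have hf := Hf _ a01. have hc := Hc _ a01.
rewrite dotvZ sqnorm2Z -/P in hf. rewrite sqnorm2Z -/P in hc.
set e := c (x + alphab *: db) - c x - J *m (alphab *: db) in hc.
have E1 : c (x + alphab *: db) = e + ((1 - alphab) *: c x + alphab *: (J *m (db - dt))).
  rewrite /e mulmxBr -scalemxAr.
  have -> : J *m dt = - c x by apply/eqP; rewrite -addr_eq0 addrC Hdt.
  rewrite scalerBl scale1r scalerBr scalerN opprK.
  set u := c (x + _); set w := alphab *: (J *m db); set y := alphab *: c x.
  exact: zz.
have N1 : norm1 (c (x + alphab *: db)) <= norm1 e + ((1 - alphab) * norm1 (c x) + alphab * norm1 (J *m (db - dt))).
  rewrite E1.
  have h1 := norm1D _ _ (e) ((1 - alphab) *: c x + alphab *: (J *m (db - dt))).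
  have h2 := norm1D _ _ ((1 - alphab) *: c x) (alphab *: (J *m (db - dt))).
  have e1 : `|1 - alphab| = 1 - alphab by apply: ger0_norm; rewrite subr_ge0.
  have e2 : `|alphab| = alphab by apply: ger0_norm; exact: ltW.
  rewrite !norm1Z e1 e2 in h2.
  apply: le_trans h1 _; rewrite lerD2l; exact: h2.
have hJ0 : 0 <= norm1 (J *m (db - dt)) by rewrite /norm1 sumr_ge0 // => i _.
have hc0 : 0 <= norm1 (c x) by rewrite /norm1 sumr_ge0 // => i _.
have hbnd : alphab ^+ 2 / 2 * ((taub * L + Gamma) * P) <= alphab * ((1 - eta) * B * DLb).
  have := ler_wpM2l (ltW ha0) Hal.
  have -> : alphab ^+ 2 / 2 * ((taub * L + Gamma) * P) = (alphab * (alphab * ((taub * L + Gamma) * P))) / 2 by ring.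
  have -> : alphab * ((1 - eta) * B * DLb) = (alphab * (2 * (1 - eta) * B * DLb)) / 2 by field.
  move=> h; rewrite ler_pM2r //.
have hf' := ler_wpM2l (ltW htb) hf.
rewrite /phi /Delta_l Hd norm10 !dotvB -/DLb.
clear Hf Hc Hal E1 hdb hf a01 hK Hd Hdt.
clearbody B DLb P e.
move: (f (x + alphab *: db)) (f x) (norm1 (c (x + alphab *: db))) (norm1 (c x)) (norm1 e) (norm1 (J *m (db - dt))) (dotv g d) (dotv g db) hf' N1 hc hbnd hJ0 hc0 => F1 F0 N1 N0 NE NJ gd gdb hf' N1' hc hbnd hJ0 hc0.
lra.
Qed.
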